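(* Let $G$ be a group with identity $e$, $A$ a set containing two distinct elements $0$ and $1$, and $S \subseteq G$ finite with $e \in S$ and $S \neq \{e\}$. Let $p \in A^S$ be given by $p(e) = 1$ and $p(s) = 0$ for $s \in S \setminus\{e\}$, and let $\tau : A^G \to A^G$ be the lazy cellular automaton with minimal local map $\mu : A^S \to A$, unique active transition $p$ and writing symbol $\mu(p) = 0$. Then for any $n\geq 2$, $\mathrm{ord}(\tau) > n$ if and only if there exists a word $(s_1, \dots, s_{n-1}) \in (S\setminus\{e\})^{n-1}$ such that $(s_j \cdots s_i)^{-1} \notin S$ for all $1 \le i \leq j \le n-1$.
   Context: $A^G$ is the set of maps $G \to A$ with shift action $(g\cdot x)(h) := x(hg)$. A cellular automaton is a map $\tau : A^G \to A^G$ with a finite $S \subseteq G$ and $\mu : A^S \to A$ such that $\tau(x)(g) = \mu((g\cdot x)|_S)$; the minimal local map is the local defining map on the neighborhood of smallest cardinality. $\tau$ is lazy with unique active transition $p \in A^S$ and writing symbol $\mu(p)$ if $e \in S$ and for all $z \in A^S$: $\mu(z) = z(e)$ iff $z \neq p$. $\tau^k$ is the $k$-fold composition, $\tau^0$ the identity; $\mathrm{ord}(\tau) := |\{\tau^k : k \in \mathbb{N}\}|$, $\mathbb{N}=\{0,1,\dots\}$. A word of length $m$ on $T \subseteq G$ is an element of $T^m$. *)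

(* Defs.v *)
From Stdlib Require Import List Arith.
Import ListNotations.

Record is_group (G : Type) (mul : G -> G -> G) (inv : G -> G) (e : G) : Prop := {
  grp_assoc : forall x y z, mul x (mul y z) = mul (mul x y) z;
  grp_mul1l : forall x, mul e x = x;
  grp_mul1r : forall x, mul x e = x;
  grp_mulVl : forall x, mul (inv x) x = e;
  grp_mulVr : forall x, mul x (inv x) = e
}.

Definition finite_subset {G : Type} (S : G -> Prop) : Prop :=
  exists l : list G, forall g, S g <-> In g l.

Definition elt {G : Type} (S : G -> Prop) := { s : G | S s }.

Definition shift {G A : Type} (mul : G -> G -> G) (g : G) (x : G -> A) : G -> A :=
  fun h => x (mul h g).

Definition is_CA_with {G A : Type} (mul : G -> G -> G) (S : G -> Prop)
  (tau : (G -> A) -> (G -> A)) (mu : (elt S -> A) -> A) : Prop :=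
  forall x g, tau x g = mu (fun s : elt S => shift mul g x (proj1_sig s)).

Definition lazy_with {G A : Type} {S : G -> Prop} {e : G} (he : S e)
  (mu : (elt S -> A) -> A) (p : elt S -> A) : Prop :=
  forall z : elt S -> A, mu z = z (exist S e he) <-> z <> p.

Fixpoint iter_fun {X : Type} (k : nat) (f : X -> X) : X -> X :=
  match k with
  | 0 => fun x => x
  | S k' => fun x => f (iter_fun k' f x)
  end.

(* ord(tau) > n : the set {tau^k : k in N} has more than n elements,
   i.e. it contains n+1 pairwise distinct elements. *)
Definition ord_gt {X : Type} (tau : X -> X) (n : nat) : Prop :=
  exists l : list (X -> X),
    NoDup l /\ length l = S n /\ forall f, In f l -> exists k, f = iter_fun k tau.

Fixpoint seg_prod {G : Type} (mul : G -> G -> G) (f : nat -> G) (i k : nat) : G :=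
  match k with
  | 0 => f i
  | S k' => mul (f (i + S k')) (seg_prod mul f i k')
  end.

(* For a word w = (s_1, ..., s_m) (stored as a list, s_i = nth (i-1) w),
   the product s_j ... s_i for 1 <= i <= j <= m. *)
Definition word_prod {G : Type} (mul : G -> G -> G) (d : G) (w : list G) (i j : nat) : G :=
  seg_prod mul (fun m => nth (m - 1) w d) i (j - i).

(* Main.v *)
Require Import Defs.
From Stdlib Require Import List Arith Lia FunctionalExtensionality Classical ClassicalEpsilon.
Import ListNotations.

Fixpoint dch {G : Type} (mul : G -> G -> G) (e : G) (w : list G) (m : nat) : G :=
  match m with
  | 0 => e
  | S m' => mul (nth m' w e) (dch mul e w m')
  end.

Theorem proposition4
  (G : Type) (mul : G -> G -> G) (inv : G -> G) (e : G)
  (hG : is_group G mul inv e)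
  (A : Type) (a0 a1 : A) (h01 : a0 <> a1)
  (S : G -> Prop) (hSfin : finite_subset S) (he : S e)
  (hSne : exists s, S s /\ s <> e)
  (p : elt S -> A)
  (hp : forall s : elt S,
          (proj1_sig s = e -> p s = a1) /\ (proj1_sig s <> e -> p s = a0))
  (tau : (G -> A) -> (G -> A)) (mu : (elt S -> A) -> A)
  (htau : is_CA_with mul S tau mu)
  (hlazy : lazy_with he mu p)
  (hwrite : mu p = a0)
  (n : nat) (hn : 2 <= n) :
  ord_gt tau n <->
  exists w : list G,
    length w = n - 1 /\
    (forall s, In s w -> S s /\ s <> e) /\
    (forall i j, 1 <= i -> i <= j -> j <= n - 1 ->
       ~ S (inv (word_prod mul e w i j))).
Proof.
  destruct hG as [Hassoc H1l H1r HVl HVr].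
  assert (Hcancel : forall a s t, mul a s = mul a t -> s = t).
  { intros a s t H.
    transitivity (mul (inv a) (mul a s)).
    - rewrite Hassoc, HVl, H1l; reflexivity.
    - rewrite H, Hassoc, HVl, H1l; reflexivity. }
  assert (HPinv : forall a P, mul (inv P) (mul P a) = a).
  { intros. rewrite Hassoc, HVl, H1l. reflexivity. }
  assert (Hrcancel : forall a s t, mul s a = mul t a -> s = t).
  { intros a s t H.
    transitivity (mul (mul s a) (inv a)).
    - rewrite <- Hassoc, HVr, H1r; reflexivity.
    - rewrite H, <- Hassoc, HVr, H1r; reflexivity. }
  pose (nb := fun (y : G -> A) h (s : elt S) => y (mul (proj1_sig s) h)).
  assert (Htau : forall y h, tau y h = mu (nb y h)) by (intros; unfold nb; rewrite htau; reflexivity).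
  assert (Hnbe : forall y h, nb y h (exist S e he) = y h)
    by (intros; unfold nb; simpl; rewrite H1l; reflexivity).
  assert (Hstep : forall y h, (nb y h = p /\ tau y h = a0) \/ (nb y h <> p /\ tau y h = y h)).
  { intros y h. rewrite Htau. destruct (classic (nb y h = p)) as [E|E].
    - left. split; [exact E|]. rewrite E; exact hwrite.
    - right. split; [exact E|]. rewrite (proj2 (hlazy _) E). apply Hnbe. }
  assert (Hflip : forall y h, tau y h <> y h -> nb y h = p /\ y h = a1 /\ tau y h = a0).
  { intros y h H. destruct (Hstep y h) as [[E T]|[E T]]; [|contradiction].
    repeat split; auto. rewrite <- Hnbe, E. apply (proj1 (hp _)). reflexivity. }
  assert (Hzero : forall y h, y h = a0 -> tau y h = a0).
  { intros y h H. destruct (Hstep y h) as [[E T]|[E T]]; congruence. }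
  assert (Hmono : forall x h t m, iter_fun t tau x h = a0 -> iter_fun (m + t) tau x h = a0).
  { intros x h t m H. induction m as [|m IH]; simpl; [exact H| apply Hzero; exact IH]. }
  assert (Hchain : forall (d : nat -> G) (w : list G) m,
    (forall k, 1 <= k <= m -> d k = mul (nth (k-1) w e) (d (k-1))) ->
    forall i j, 1 <= i -> i <= j -> j <= m -> d j = mul (word_prod mul e w i j) (d (i-1))).
  { intros d w m Hd i j Hi Hij Hjm. unfold word_prod.
    assert (Hj : j = i + (j - i)) by lia. remember (j - i) as k. clear Heqk. subst j.
    induction k as [|k IH].
    - simpl. rewrite Nat.add_0_r. apply Hd; lia.
    - simpl seg_prod. rewrite <- Hassoc. rewrite <- IH by lia.
      assert (E : i + k = i + Datatypes.S k - 1) by lia. rewrite E. apply Hd. lia. }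
  split.
  - intros Hord.
    assert (Hex : exists x g, iter_fun (n-1) tau x g <> iter_fun n tau x g).
    { apply NNPP. intro Hno.
      assert (Heq : iter_fun n tau = iter_fun (n-1) tau).
      { apply functional_extensionality; intro x; apply functional_extensionality; intro g.
        destruct (classic (iter_fun (n-1) tau x g = iter_fun n tau x g)) as [E|E];
          [auto| exfalso; apply Hno; eauto]. }
      assert (HS : iter_fun (Datatypes.S (n-1)) tau = iter_fun n tau) by (f_equal; lia).
      assert (Hall : forall m, iter_fun (n-1+m) tau = iter_fun (n-1) tau).
      { induction m as [|m IH].
        - rewrite Nat.add_0_r; reflexivity.
        - rewrite Nat.add_succ_r. simpl. rewrite IH.
          transitivity (iter_fun n tau); [|exact Heq].
          rewrite <- HS. reflexivity. }
      destruct Hord as [l [Hnd [Hlen Hin]]].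
      assert (Hincl : incl l (map (fun k => iter_fun k tau) (seq 0 n))).
      { intros f Hf. destruct (Hin f Hf) as [k Hk]. subst f. apply in_map_iff.
        destruct (Nat.lt_ge_cases k n) as [Hk|Hk].
        - exists k. split; [reflexivity| apply in_seq; lia].
        - exists (n-1). split.
          + replace k with (n-1+(k-(n-1))) by lia. symmetry. apply Hall.
          + apply in_seq; lia. }
      pose proof (NoDup_incl_length Hnd Hincl) as H.
      rewrite length_map, length_seq in H. lia. }
    destruct Hex as [x [g Hg]].
    assert (Hsucc : forall m c, iter_fun (Datatypes.S m) tau x c <> iter_fun (Datatypes.S (Datatypes.S m)) tau x c ->
      exists s, S s /\ s <> e /\ iter_fun m tau x (mul s c) <> iter_fun (Datatypes.S m) tau x (mul s c)).
    { intros m c H.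
      set (y0 := iter_fun m tau x).
      change (tau y0 c <> tau (tau y0) c) in H.
      destruct (Hflip (tau y0) c (fun E => H (eq_sym E))) as [E1 [E2 E3]].
      destruct (Hstep y0 c) as [[F1 F2]|[F1 F2]]; [congruence|].
      assert (Hex : exists s, nb y0 c s <> p s).
      { apply NNPP; intro K; apply F1; apply functional_extensionality; intro s;
        apply NNPP; intro K'; apply K; exists s; exact K'. }
      destruct Hex as [[s hs] Hs].
      exists s. split; [exact hs|].
      assert (Hse : s <> e).
      { intro Es. subst s. apply Hs. unfold nb; simpl. rewrite H1l. rewrite <- F2, E2.
        symmetry. apply (proj1 (hp _)). reflexivity. }
      split; [exact Hse|].
      change (y0 (mul s c) <> tau y0 (mul s c)).
      intro K. apply Hs. unfold nb; simpl. rewrite K.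
      change (tau y0 (mul s c)) with (nb (tau y0) c (exist S s hs)). rewrite E1. reflexivity. }
    assert (Hbuild : forall m c, iter_fun m tau x c <> iter_fun (Datatypes.S m) tau x c ->
      exists (w : list G) (d : nat -> G), length w = m /\ d 0 = c /\
        (forall s, In s w -> S s /\ s <> e) /\
        (forall k, 1 <= k <= m -> d k = mul (nth (k-1) w e) (d (k-1))) /\
        (forall k, k <= m -> iter_fun (m-k) tau x (d k) <> iter_fun (Datatypes.S (m-k)) tau x (d k))).
    { induction m as [|m IH]; intros c Hc.
      - exists nil, (fun _ => c). split; [reflexivity|]. split; [reflexivity|].
        split; [intros s []|]. split; [intros; lia|].
        intros k Hk; replace k with 0 by lia; exact Hc.
      - destruct (Hsucc m c Hc) as [s [Hs [Hse Hfl]]].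
        destruct (IH _ Hfl) as [w [d [Hl [Hdm [Hw [Hd Hf]]]]]].
        exists (s :: w), (fun k => match k with 0 => c | Datatypes.S k' => d k' end).
        split; [simpl; lia|].
        split; [reflexivity|].
        split.
        { intros s' [H|H]; [subst; auto|auto]. }
        split.
        + intros [|k] Hk; [lia|].
          destruct k as [|k].
          * simpl. rewrite Hdm. reflexivity.
          * replace (Datatypes.S (Datatypes.S k) - 1) with (Datatypes.S k) by lia.
            simpl nth. rewrite Hd by lia. f_equal; f_equal; lia.
        + intros [|k] Hk.
          * rewrite Nat.sub_0_r. exact Hc.
          * replace (Datatypes.S m - Datatypes.S k) with (m - k) by lia. apply Hf; lia. }
    destruct (Hbuild (n-1) g) as [w [d [Hl [Hdg [Hw [Hd Hf]]]]]].
    { replace (Datatypes.S (n-1)) with n by lia. exact Hg. }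
    exists w. split; [exact Hl|]. split; [exact Hw|].
    intros i j Hi Hij Hjn HS.
    pose proof (Hchain d w (n-1) Hd i j Hi Hij Hjn) as Hc.
    set (P := word_prod mul e w i j) in *.
    assert (Hdj : d (i-1) = mul (inv P) (d j)) by (rewrite Hc, HPinv; reflexivity).
    assert (Ht : exists t, t <= n-1-(i-1) /\ iter_fun t tau x (d (i-1)) = a0).
    { assert (Hfi := Hf j ltac:(lia)).
      destruct (Hflip (iter_fun (n-1-j) tau x) (d j) (fun E => Hfi (eq_sym E))) as [E1 [E2 E3]].
      destruct (classic (inv P = e)) as [Pe|Pe].
      - exists (Datatypes.S (n-1-j)). split; [lia|]. rewrite Hdj, Pe, H1l. exact E3.
      - exists (n-1-j). split; [lia|]. rewrite Hdj.
        pose proof (f_equal (fun z => z (exist S (inv P) HS)) E1) as E4.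
        unfold nb in E4; simpl in E4. rewrite E4. apply (proj2 (hp _)). simpl. exact Pe. }
    destruct Ht as [t [Htj Ht]].
    pose proof (Hmono x (d (i-1)) t (n-1-(i-1) - t) Ht) as H.
    replace (n-1-(i-1) - t + t) with (n-1-(i-1)) in H by lia.
    apply (Hf (i-1) ltac:(lia)). rewrite H. symmetry. exact (Hzero _ _ H).
  - intros [w [Hl [Hw Hno]]].
    pose (d := dch mul e w).
    assert (Hd : forall k, 1 <= k <= n-1 -> d k = mul (nth (k-1) w e) (d (k-1))).
    { intros [|k] Hk; [lia|]. unfold d. simpl. rewrite Nat.sub_0_r. reflexivity. }
    assert (Hnot : forall k k0, k < k0 <= n-1 -> forall s : G, S s -> mul s (d k0) <> d k).
    { intros k k0 Hk s Hs' E.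
      assert (Hc := Hchain d w (n-1) Hd (Datatypes.S k) k0 ltac:(lia) ltac:(lia) ltac:(lia)).
      replace (Datatypes.S k - 1) with k in Hc by lia.
      apply (Hno (Datatypes.S k) k0); try lia.
      replace (inv (word_prod mul e w (Datatypes.S k) k0)) with s; [exact Hs'|].
      apply (Hrcancel (d k0)). rewrite E. rewrite Hc. rewrite HPinv. reflexivity. }
    assert (Hdist : forall k k0, k < k0 <= n-1 -> d k0 <> d k).
    { intros k k0 H E. apply (Hnot k k0 H e he). rewrite H1l. exact E. }
    pose (x := fun h => if excluded_middle_informative (exists k, k <= n-1 /\ h = d k) then a1 else a0).
    assert (Inv : forall t, (forall k, k + t <= n-1 -> iter_fun t tau x (d k) = a1) /\
       (forall h, (forall k, k + t <= n-1 -> h <> d k) -> iter_fun t tau x h = a0)).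
    { induction t as [|t IHt].
      - split.
        + intros k Hk. simpl. unfold x. destruct (excluded_middle_informative _) as [_|N];
            [reflexivity| exfalso; apply N; exists k; split; [lia|reflexivity]].
        + intros h Hh. simpl. unfold x. destruct (excluded_middle_informative _) as [[k [Hk E]]|_];
            [exfalso; apply (Hh k); [lia|exact E]|reflexivity].
      - destruct IHt as [I1 I2]. set (y := iter_fun t tau x). split.
        + intros k Hk. change (tau y (d k) = a1).
          assert (Hin : In (nth k w e) w) by (apply nth_In; lia).
          destruct (Hw _ Hin) as [Hks Hkne].
          destruct (Hstep y (d k)) as [[E _]|[_ E]].
          * exfalso.
            pose proof (f_equal (fun z => z (exist S _ Hks)) E) as E4.
            unfold nb in E4; simpl in E4.
            assert (Hdk := Hd (Datatypes.S k) ltac:(lia)).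
            replace (Datatypes.S k - 1) with k in Hdk by lia.
            rewrite <- Hdk in E4.
            rewrite (proj2 (hp _)) in E4 by (simpl; exact Hkne).
            rewrite I1 in E4 by lia. apply h01. symmetry. exact E4.
          * rewrite E. apply I1. lia.
        + intros h Hh. change (tau y h = a0).
          destruct (classic (t <= n-1 /\ h = d (n-1-t))) as [[Ht Eh]|Nh].
          * subst h. destruct (Hstep y (d (n-1-t))) as [[_ E]|[Np _]]; [exact E|exfalso; apply Np].
            apply functional_extensionality. intros [s hs]. unfold nb; simpl.
            destruct (classic (s = e)) as [Es|Es].
            -- subst s. rewrite H1l. transitivity a1; [apply I1; lia| symmetry; apply (proj1 (hp _)); reflexivity].
            -- transitivity a0; [|symmetry; apply (proj2 (hp _)); simpl; exact Es]. apply I2.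
               intros k Hk Ek. destruct (Nat.eq_dec k (n-1-t)) as [->|Hkt].
               ++ apply Es. apply (Hrcancel (d (n-1-t))). rewrite H1l. exact Ek.
               ++ exact (Hnot k (n-1-t) ltac:(lia) s hs Ek).
          * apply Hzero. apply I2. intros k Hk Ek. destruct (Nat.eq_dec k (n-1-t)) as [->|Hkt].
            -- apply Nh; split; [lia|exact Ek].
            -- apply (Hh k); [lia|exact Ek]. }
    assert (Hsep : forall a b, a < b <= n -> iter_fun a tau <> iter_fun b tau).
    { intros a b Hab E. destruct (Inv a) as [I1 _]. destruct (Inv b) as [_ I2].
      assert (X1 := I1 (n-1-a) ltac:(lia)).
      assert (X2 : iter_fun b tau x (d (n-1-a)) = a0)
        by (apply I2; intros k Hk Ek; apply (Hdist k (n-1-a)); [lia| exact Ek]).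
      rewrite E in X1. congruence. }
    exists (map (fun k => iter_fun k tau) (seq 0 (Datatypes.S n))). split; [|split].
    + apply NoDup_map_NoDup_ForallPairs; [|apply seq_NoDup].
      intros a b Ha Hb Eab. apply in_seq in Ha. apply in_seq in Hb.
      destruct (Nat.lt_total a b) as [Hab|[Hab|Hab]].
      * exfalso. exact (Hsep a b ltac:(lia) Eab).
      * exact Hab.
      * exfalso. exact (Hsep b a ltac:(lia) (eq_sym Eab)).
    + rewrite length_map, length_seq; reflexivity.
    + intros f Hf. apply in_map_iff in Hf. destruct Hf as [k [Hk _]]. exists k; symmetry; exact Hk.
Qed.
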